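(* Let $m,n\in\mathbb{N}$. For $1\le\ell\le m$ let $0<q_{\ell}<1$, $\alpha_{\ell}\ge0$, $r_{\ell},s_{\ell}\in\mathbb{N}_{0}$, and $a_{1,\ell},\dots,a_{r_{\ell},\ell},b_{1,\ell},\dots,b_{s_{\ell},\ell}\in\mathbb{C}$ with \[ \frac{(a_{1,\ell},\dots,a_{r_{\ell},\ell};q_{\ell})_{N}}{(b_{1,\ell},\dots,b_{s_{\ell},\ell};q_{\ell})_{N}}\ge0\quad\text{for all }N\in\mathbb{N}_{0}. \] Let $z_{j,\ell}\in\mathbb{C}$ for $1\le j\le n$, where if $\alpha_{\ell}>0$ the $z_{j,\ell}$ are arbitrary, and if $\alpha_{\ell}=0$ the $z_{j,\ell}$ ($1\le j\le n$) lie in an open disk $\{|z|<R_\ell\}$, $R_\ell<1$, chosen so that the series defining ${}_{r_\ell}A^{(0)}_{s_\ell}$ converges at $w$ whenever $|w|<R_\ell^2$. Then the $n\times n$ matrix \[ \left(\prod_{\ell=1}^{m}{}_{r_{\ell}}A_{s_{\ell}}^{(\alpha_{\ell})}\left(a_{1,\ell},\dots,a_{r_{\ell},\ell};\,b_{1,\ell},\dots,b_{s_{\ell},\ell};\,q_{\ell};\,z_{j,\ell}\overline{z_{k,\ell}}\right)\right)_{j,k=1}^{n} \] is positive semidefinite.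
   Context: For $0<q<1$: $(z;q)_\infty=\prod_{k\ge0}(1-zq^k)$, $(z;q)_N=(z;q)_\infty/(zq^N;q)_\infty$, and $(z_1,\dots,z_r;q)_N=\prod_{i}(z_i;q)_N$. For $\alpha\ge0$, \[ {}_{r}A_{s}^{(\alpha)}(a_{1},\dots,a_{r};\,b_{1},\dots,b_{s};\,q;\,z)=\sum_{N=0}^{\infty}\frac{(a_{1},\dots,a_{r};q)_{N}}{(b_{1},\dots,b_{s};q)_{N}}q^{\alpha N^{2}}z^{N}. \] A complex matrix $A=(a_{j,k})$ is positive semidefinite if $\sum_{j,k}a_{j,k}w_j\overline{w_k}\ge0$ for all complex $w_j$. *)

(* Defs.v *)
From HB Require Import structures.
From mathcomp Require Import all_boot all_order all_algebra.
From mathcomp Require Import all_classical all_reals all_analysis.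
From mathcomp Require Export complex.
Import Order.TTheory GRing.Theory Num.Theory.
Export numFieldTopology.Exports numFieldNormedType.Exports.

Set Implicit Arguments.
Unset Strict Implicit.
Unset Printing Implicit Defensive.

Local Open Scope ring_scope.
Local Open Scope complex_scope.

(* The complex numbers R[i] with the topology / normed structure induced by
   the complex modulus (the canonical numFieldType one), so that limits of
   complex series make sense. *)
HB.instance Definition _ (R : rcfType) := PseudoPointedMetric.copy R[i] (R[i])^o.
HB.instance Definition _ (R : rcfType) := NormedModule.copy R[i] (R[i])^o.

Definition qpoch (R : rcfType) (a q : R[i]) (N : nat) : R[i] :=
  \prod_(k < N) (1 - a * q ^+ k).

Definition qpochs (R : rcfType) (s : seq R[i]) (q : R[i]) (N : nat) : R[i] :=
  \prod_(x <- s) qpoch x q N.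

Definition qA_term (R : realType) (a b : seq R[i]) (q alpha : R) (z : R[i])
  (N : nat) : R[i] :=
  qpochs a q%:C N / qpochs b q%:C N * (powR q (alpha * (N ^ 2)%:R))%:C * z ^+ N.

Definition qA (R : realType) (a b : seq R[i]) (q alpha : R) (z : R[i]) : R[i] :=
  limn (series (qA_term a b q alpha z)).

(* Positive semidefinite complex matrix:  sum_{j,k} A_{j,k} w_j conj(w_k) >= 0
   for all complex w (>= 0 in the order of R[i]: real and nonnegative). *)
Definition psd (R : rcfType) (n : nat) (A : 'M[R[i]]_n) : Prop :=
  forall w : 'I_n -> R[i], 0 <= \sum_(j < n) \sum_(k < n) A j k * w j * (w k)^*.

(* Main.v *)
Require Import Defs.
From mathcomp Require Import all_boot all_order all_algebra.
From mathcomp Require Import all_classical all_reals all_analysis.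
From mathcomp Require Import ring lra.
Import Order.TTheory GRing.Theory Num.Theory.
Local Open Scope ring_scope.
Local Open Scope complex_scope.
Local Open Scope classical_set_scope.
Set Implicit Arguments.
Unset Strict Implicit.
Section N.
Variable R : realType.
Local Notation C := R[i].

Definition nc (x : C) : R := Num.sqrt (complex.Re x ^+ 2 + complex.Im x ^+ 2).
Lemma ncE (x : C) : `|x| = (nc x)%:C.
Proof. exact: normc_def. Qed.
Lemma nc_ge0 x : 0 <= nc x. Proof. exact: sqrtr_ge0. Qed.
Lemma ncM x y : nc (x * y) = nc x * nc y.
Proof. apply: complexI; by rewrite rmorphM /= -!ncE normrM. Qed.
Lemma ncD x y : nc (x + y) <= nc x + nc y.
Proof. by rewrite -lecR rmorphD /= -!ncE ler_normD. Qed.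
Lemma ncB x y : nc x - nc y <= nc (x - y).
Proof.
rewrite -lecR rmorphB /= -!ncE lerBlDr.
by have := ler_normD (x - y) y; rewrite subrK.
Qed.
Lemma ncN x : nc (- x) = nc x.
Proof. apply: complexI; by rewrite -!ncE normrN. Qed.
Lemma ncV x : nc (x^-1) = (nc x)^-1.
Proof. apply: complexI; by rewrite -!ncE normfV fmorphV /= -ncE. Qed.
Lemma nc_real (r : R) : nc (r%:C) = `|r|.
Proof. by rewrite /nc /= expr0n /= addr0 sqrtr_sqr. Qed.
Lemma nc1 : nc 1 = 1.
Proof. by rewrite (nc_real 1) normr1. Qed.
Lemma ncX x k : nc (x ^+ k) = nc x ^+ k.
Proof. elim: k => [|k IH]; by rewrite ?expr0 ?nc1 // !exprS ncM IH. Qed.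
Lemma nc_prod (I : Type) (s : seq I) (F : I -> C) : nc (\prod_(i <- s) F i) = \prod_(i <- s) nc (F i).
Proof. elim: s => [|i s IH]; by rewrite ?big_nil ?nc1 // !big_cons ncM IH. Qed.
Lemma Re_le x : `|complex.Re x| <= nc x.
Proof.
rewrite /nc -sqrtr_sqr ler_sqrt; last by rewrite addr_ge0 // sqr_ge0.
by rewrite lerDl sqr_ge0.
Qed.
Lemma Im_le x : `|complex.Im x| <= nc x.
Proof.
rewrite /nc -sqrtr_sqr ler_sqrt; last by rewrite addr_ge0 // sqr_ge0.
by rewrite lerDr sqr_ge0.
Qed.
End N.
Section S.
Variable R : realType.
Local Notation C := R[i].

Lemma cvg_R2C (r : nat -> R) (l : R) : r n @[n --> \oo] --> l ->
  (r n)%:C @[n --> \oo] --> l%:C.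
Proof.
move=> /cvgrPdist_lt H; apply/cvgrPdist_lt => e e0.
have e0' : 0 < complex.Re e by move: e0; rewrite ltcE => /andP [].
have eIm : complex.Im e = 0 by move: e0; rewrite ltcE => /andP [/eqP -> _].
near=> n.
have : `|l - r n| < complex.Re e by near: n; exact: H.
rewrite -rmorphB /= ncE nc_real ltcE /= eIm eqxx /=.
Unshelve. all: by end_near.
Qed.
End S.
Section S2.
Variable R : realType.
Local Notation C := R[i].
Lemma cvg_series_nc (u : nat -> C) (v : nat -> R) :
  (forall n, nc (u n) <= v n) -> cvgn (series v) -> cvgn (series u).
Proof.
move=> uv cv.
have v0 n : 0 <= v n := le_trans (nc_ge0 _) (uv n).
have cre : cvgn (series (fun n => complex.Re (u n))).
  apply: normed_cvg; apply: (series_le_cvg _ v0 _ cv) => n.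
    exact: normr_ge0.
  exact: (le_trans (Re_le _) (uv n)).
have cim : cvgn (series (fun n => complex.Im (u n))).
  apply: normed_cvg; apply: (series_le_cvg _ v0 _ cv) => n.
    exact: normr_ge0.
  exact: (le_trans (Im_le _) (uv n)).
have E : series u = fun n => (series (fun n => complex.Re (u n)) n)%:C +
     'i * (series (fun n => complex.Im (u n)) n)%:C.
  apply/funext => n; rewrite /series /= !rmorph_sum /= mulr_sumr -big_split /=.
  by apply: eq_bigr => k _; rewrite -complexE.
apply: (@cvgP _ _ ((limn (series (fun n => complex.Re (u n))))%:C +
     'i * (limn (series (fun n => complex.Im (u n))))%:C)).
rewrite E.
apply: (@cvgD C C nat _ _ _ _ _ _ (cvg_R2C cre)).
exact: (@cvgM C nat _ _ _ _ _ _ (@cvg_cst C _ nat _ _) (cvg_R2C cim)).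
Qed.
End S2.
Section S3.
Variable R : realType.
Local Notation C := R[i].

Lemma geomK (r c : R) : 0 <= r < 1 -> 0 <= c ->
  exists K, forall k, (K <= k)%N -> c * r ^+ k <= 1/2.
Proof.
move=> /andP [r0 r1] c0.
have := @cvg_geometric R c r; rewrite ger0_norm // => /(_ r1) /cvgrPdist_lt.
move=> /(_ (1 / 2)) [].
  by rewrite divr_gt0.
move=> K _ HK; exists K => k /HK /=; rewrite sub0r normrN.
move=> h; apply: ltW; apply: le_lt_trans h; exact: ler_norm.
Qed.

Lemma ev_bound (f g : nat -> R) K : (forall n, (K <= n)%N -> f n <= g n) ->
  (forall n, 0 < g n) -> exists Cc, forall n, f n <= Cc * g n.
Proof.
move=> fg g0.
exists (1 + \sum_(i < K) `|f i| / g i) => n.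
have s0 : 0 <= \sum_(i < K) `|f i| / g i.
  by apply: sumr_ge0 => i _; rewrite divr_ge0 // ltW.
case: (leqP K n) => [Kn|nK].
  apply: (le_trans (fg n Kn)); apply: ler_peMl; [exact: ltW | by rewrite lerDl].
apply: (le_trans (ler_norm (f n))).
have -> : `|f n| = `|f n| / g n * g n by rewrite divfK ?gt_eqF.
apply: ler_wpM2r; first exact: ltW.
rewrite (bigD1 (Ordinal nK)) //= addrCA; apply: ler_wpDr => //.
rewrite addr_ge0 //; apply: sumr_ge0 => i _; rewrite divr_ge0 // ltW //.
Qed.
End S3.
Section S4.
Variable R : realType.
Local Notation C := R[i].

Lemma prod_ord_const N (x : R) : \prod_(k < N) x = x ^+ N.
Proof. elim: N => [|N IH]; by rewrite ?big_ord0 ?expr0 // big_ord_recr /= IH exprSr. Qed.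

Lemma qpoch_le (c : C) (q : R) N : 0 <= q <= 1 -> nc (qpoch c q%:C N) <= (1 + nc c) ^+ N.
Proof.
move=> /andP [q0 q1].
rewrite /qpoch nc_prod -prod_ord_const; apply: ler_prod => k _; rewrite nc_ge0 /=.
apply: (le_trans (ncD _ _)); rewrite nc1 lerD2l ncN ncM ncX nc_real ger0_norm //.
apply: ler_piMr; first exact: nc_ge0.
exact: exprn_ile1.
Qed.

Lemma qpochs_le (s : seq C) (q : R) N : 0 <= q <= 1 ->
  nc (qpochs s q%:C N) <= (\prod_(c <- s) (1 + nc c)) ^+ N.
Proof.
move=> hq; rewrite /qpochs nc_prod -prodrXl; apply: ler_prod => c _.
by rewrite nc_ge0 qpoch_le.
Qed.

Lemma qpoch_inv (c : C) (q : R) : 0 <= q < 1 ->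
  exists D, 0 <= D /\ forall N, nc ((qpoch c q%:C N)^-1) <= D ^+ N.
Proof.
move=> hq; have /andP [q0 q1] := hq.
pose g k := nc ((1 - c * q%:C ^+ k)^-1).
have [K HK] := geomK hq (nc_ge0 c).
have gb : forall k, (K <= k)%N -> g k <= 2.
  move=> k Kk; rewrite /g ncV.
  have h1 : 1 / 2 <= nc (1 - c * q%:C ^+ k).
    apply: le_trans (ncB _ _); rewrite nc1 ncM ncX nc_real ger0_norm //.
    have := HK k Kk; lra.
  have h0 : 0 < nc (1 - c * q%:C ^+ k) by apply: lt_le_trans h1; lra.
  rewrite -div1r ler_pdivrMr //; lra.
have [Cc HC] := @ev_bound R g (fun _ => 2) K gb (fun _ => ltr0n _ 2).
have D0 : 0 <= Cc * 2 by apply: le_trans (HC 0%N); exact: nc_ge0.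
exists (Cc * 2); split => // N.
rewrite /qpoch -prodfV nc_prod -prod_ord_const; apply: ler_prod => k _.
by rewrite nc_ge0 /=; exact: HC.
Qed.

Lemma qpochs_inv (s : seq C) (q : R) : 0 <= q < 1 ->
  exists D, 0 <= D /\ forall N, nc ((qpochs s q%:C N)^-1) <= D ^+ N.
Proof.
move=> hq; elim: s => [|c s [Ds [Ds0 HDs]]].
  exists 1; split => // N; by rewrite /qpochs big_nil invr1 nc1 expr1n.
have [Dc [Dc0 HDc]] := qpoch_inv c hq.
exists (Dc * Ds); split; first exact: mulr_ge0.
move=> N; rewrite /qpochs big_cons invfM ncM exprMn.
by apply: ler_pM; rewrite ?nc_ge0 ?HDc ?HDs.
Qed.
End S4.
Section S5.
Variable R : realType.
Local Notation C := R[i].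

Lemma cvg_pos (a b : seq C) (q alpha : R) (x : C) :
  0 < q < 1 -> 0 < alpha -> cvgn (series (qA_term a b q alpha x)).
Proof.
move=> /andP [q0 q1] al0.
have hq : 0 <= q <= 1 by rewrite !ltW.
have hq' : 0 <= q < 1 by rewrite ltW.
pose A := \prod_(c <- a) (1 + nc c).
have A0 : 0 <= A by apply: prodr_ge0 => c _; rewrite addr_ge0 ?nc_ge0.
have [D [D0 HD]] := qpochs_inv b hq'.
pose rho := powR q alpha.
have rho0 : 0 <= rho := powR_ge0 _ _.
have rho1 : rho < 1.
  rewrite lt_neqAle; apply/andP; split.
    rewrite /rho powR_eq1 negb_or negb_or; apply/and3P; split.
    - by rewrite lt_eqF.
    - by rewrite -leNgt ltW.
    - by rewrite gt_eqF.
  rewrite /rho -(powRr0 q); apply: ger_powR; [by rewrite q0 ltW | exact: ltW].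
pose E := A * D * nc x.
have E0 : 0 <= E by rewrite mulr_ge0 ?nc_ge0 // mulr_ge0.
have hr : 0 <= rho < 1 by rewrite rho0 rho1.
have [K HK] := @geomK R rho E hr E0.
have bnd : forall N, nc (qA_term a b q alpha x N) <= (E * rho ^+ N) ^+ N.
  move=> N; rewrite /qA_term !ncM ncX nc_real ger0_norm ?powR_ge0 //.
  have -> : powR q (alpha * (N ^ 2)%:R) = (rho ^+ N) ^+ N.
    by rewrite powRrM powR_mulrn // -exprM mulnn.
  have -> : (E * rho ^+ N) ^+ N = A ^+ N * D ^+ N * nc x ^+ N * (rho ^+ N) ^+ N.
    by rewrite /E !exprMn.
  rewrite mulrAC; apply: ler_wpM2r; first by rewrite !exprn_ge0.
  apply: ler_pM; rewrite ?exprn_ge0 ?nc_ge0 ?mulr_ge0 ?nc_ge0 //.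
  apply: ler_pM; rewrite ?nc_ge0 //.
  exact: qpochs_le.
have bnd2 : forall N, (K <= N)%N -> nc (qA_term a b q alpha x N) <= (1 / 2) ^+ N.
  move=> N KN; apply: (le_trans (bnd N)); apply: lerXn2r.
  - by rewrite nnegrE mulr_ge0 // exprn_ge0.
  - by rewrite nnegrE.
  - exact: HK.
have h2 : (0 : R) < 1 / 2 by rewrite divr_gt0.
have [Cc HC] := @ev_bound R (fun N => nc (qA_term a b q alpha x N)) (fun N => (1 / 2) ^+ N) K bnd2
   (fun N => exprn_gt0 _ (h2 : 0 < 1 / 2)).
apply: (@cvg_series_nc R _ (geometric Cc (1 / 2))) => [N|]; first exact: HC.
apply: is_cvg_geometric_series; rewrite ger0_norm; last exact: ltW.
by rewrite ltr_pdivrMr // mul1r ltr1n.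
Qed.
End S5.

Set Implicit Arguments.
Unset Strict Implicit.
Section PSD.
Variable R : realType.
Local Notation C := R[i].

Definition Qf n (F : 'I_n -> 'I_n -> C) (w : 'I_n -> C) : C :=
  \sum_(j < n) \sum_(k < n) F j k * w j * (w k)^*.

Lemma Qf_one n (w : 'I_n -> C) : 0 <= Qf (fun _ _ => 1) w.
Proof.
rewrite /Qf.
have -> : \sum_(j < n) \sum_(k < n) 1 * w j * (w k)^* =
  (\sum_(j < n) w j) * (\sum_(k < n) w k)^*.
  rewrite mulr_suml; apply: eq_bigr => j _.
  rewrite rmorph_sum mulr_sumr; apply: eq_bigr => k _; by rewrite mul1r.
exact: mulcJ_ge0.
Qed.

Lemma Qf_step n (F : 'I_n -> 'I_n -> C) (x : 'I_n -> C) (t : nat -> C) M :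
  (forall N, 0 <= t N) ->
  (forall w, 0 <= Qf F w) ->
  forall w, 0 <= Qf (fun j k => (\sum_(0 <= N < M) t N * (x j * (x k)^*) ^+ N) * F j k) w.
Proof.
move=> t0 HF w.
have -> : Qf (fun j k => (\sum_(0 <= N < M) t N * (x j * (x k)^*) ^+ N) * F j k) w =
   \sum_(0 <= N < M) t N * Qf F (fun j => w j * x j ^+ N).
  rewrite /Qf.
  under eq_bigr => j _ do under eq_bigr => k _ do rewrite mulr_suml mulr_suml mulr_suml.
  under eq_bigr => j _ do rewrite exchange_big /=.
  rewrite exchange_big /=; apply: eq_bigr => N _.
  rewrite mulr_sumr; apply: eq_bigr => j _; rewrite mulr_sumr; apply: eq_bigr => k _.
  rewrite !rmorphM /= !rmorphXn /= exprMn; ring.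
apply: sumr_ge0 => N _; apply: mulr_ge0 => //.
Qed.

Lemma Qf_prod n m (T : 'I_m -> nat -> C) (x : 'I_n -> 'I_m -> C) M :
  (forall l N, 0 <= T l N) ->
  forall (s : seq 'I_m) w,
  0 <= Qf (fun j k => \prod_(l <- s) \sum_(0 <= N < M) T l N * (x j l * (x k l)^*) ^+ N) w.
Proof.
move=> T0; elim=> [|l s IH] w.
  rewrite (_ : (fun j k => _) = (fun _ _ => 1)); first exact: Qf_one.
  by apply/funext=> j; apply/funext=> k; rewrite big_nil.
rewrite (_ : (fun j k => _) = (fun j k => (\sum_(0 <= N < M) T l N * (x j l * (x k l)^*) ^+ N) *
   \prod_(l <- s) \sum_(0 <= N < M) T l N * (x j l * (x k l)^*) ^+ N)); last first.
  by apply/funext=> j; apply/funext=> k; rewrite big_cons.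
exact: (Qf_step (F := fun j k => \prod_(l <- s) \sum_(0 <= N < M) T l N * (x j l * (x k l)^*) ^+ N)
   (fun j => x j l) M (T0 l) IH w).
Qed.

End PSD.
Section L.
Variable R : realType.
Local Notation C := R[i].

Lemma cvg_sum_seq (I : Type) (r : seq I) (f : I -> nat -> C) (a : I -> C) :
  (forall i, f i n @[n --> \oo] --> a i) ->
  (\sum_(i <- r) f i n) @[n --> \oo] --> \sum_(i <- r) a i.
Proof.
move=> H; elim: r => [|i r IH].
  rewrite big_nil. rewrite (_ : (fun n => _) = (fun _ => 0)); last by apply/funext=> n; rewrite big_nil.
  exact: (@cvg_cst C 0 nat _ _).
rewrite big_cons. rewrite (_ : (fun n => _) = (fun n => f i n + \sum_(j <- r) f j n)); last by apply/funext=> n; rewrite big_cons.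
exact: (@cvgD C C nat _ _ _ _ _ _ (H i) IH).
Qed.

Lemma cvg_prod_seq (I : Type) (r : seq I) (f : I -> nat -> C) (a : I -> C) :
  (forall i, f i n @[n --> \oo] --> a i) ->
  (\prod_(i <- r) f i n) @[n --> \oo] --> \prod_(i <- r) a i.
Proof.
move=> H; elim: r => [|i r IH].
  rewrite big_nil. rewrite (_ : (fun n => _) = (fun _ => 1)); last by apply/funext=> n; rewrite big_nil.
  exact: (@cvg_cst C 1 nat _ _).
rewrite big_cons. rewrite (_ : (fun n => _) = (fun n => f i n * \prod_(j <- r) f j n)); last by apply/funext=> n; rewrite big_cons.
exact: (@cvgM C nat _ _ _ _ _ _ (H i) IH).
Qed.

Lemma ge0_lim (u : nat -> C) l : (forall n, 0 <= u n) -> u n @[n --> \oo] --> l -> 0 <= l.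
Proof.
move=> u0 ul.
have h1 := (@cvg_norm C C nat _ _ u l ul).
have h3 := h1 eventually_filter.
rewrite (eq_cvg _ _ (fun x => ger0_norm (u0 x))) in h3.
have e1 := cvg_lim (@norm_hausdorff C C) ul.
have e2 := cvg_lim (@norm_hausdorff C C) h3.
rewrite -e1 e2.
exact: normr_ge0.
Qed.
End L.

Theorem mainTheorem15 (R : realType) (m n : nat)
  (q alpha Rad : 'I_m -> R) (a b : 'I_m -> seq R[i])
  (z : 'I_n -> 'I_m -> R[i]) :
  (forall l, 0 < q l < 1) ->
  (forall l, 0 <= alpha l) ->
  (forall l (N : nat), 0 <= qpochs (a l) (q l)%:C N / qpochs (b l) (q l)%:C N) ->
  (forall l, alpha l = 0 ->
     [/\ Rad l < 1,
         (forall w : R[i], `|w| < (Rad l ^+ 2)%:C ->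
            cvgn (series (qA_term (a l) (b l) (q l) 0 w)))
       & (forall j, `|z j l| < (Rad l)%:C)]) ->
  psd (\matrix_(j < n, k < n)
         \prod_(l < m) qA (a l) (b l) (q l) (alpha l) (z j l * (z k l)^*)).
Proof.
move=> hq ha hpos hrad w.
pose T := fun l (N : nat) => qpochs (a l) (q l)%:C N / qpochs (b l) (q l)%:C N *
   (powR (q l) (alpha l * (N ^ 2)%:R))%:C.
have T0 : forall l N, 0 <= T l N.
  by move=> l N; apply: mulr_ge0 => //; rewrite ler0c powR_ge0.
have cv : forall l j k, cvgn (series (qA_term (a l) (b l) (q l) (alpha l) (z j l * (z k l)^*))).
  move=> l j k.
  have [a0|apos] : alpha l = 0 \/ 0 < alpha l.
    by case: (ha l); rewrite le_eqVlt => /orP [/eqP <-|->]; [left|right].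
  - case: (hrad l a0) => hR hc hz; rewrite a0; apply: hc.
    rewrite normrM normcJ expr2 rmorphM /=.
    by apply: ltr_pM => //; apply: normr_ge0.
  - by apply: cvg_pos.
have key : Qf (fun j k => \prod_(l <- index_enum 'I_m)
     series (qA_term (a l) (b l) (q l) (alpha l) (z j l * (z k l)^*)) M) w @[M --> \oo] -->
   Qf (fun j k => \prod_(l <- index_enum 'I_m) qA (a l) (b l) (q l) (alpha l) (z j l * (z k l)^*)) w.
  rewrite /Qf; apply: cvg_sum_seq => j; apply: cvg_sum_seq => k.
  apply: (@cvgM R[i] nat _ _ _ _ _ _ _ (@cvg_cst R[i] _ nat _ _)).
  apply: (@cvgM R[i] nat _ _ _ _ _ _ _ (@cvg_cst R[i] _ nat _ _)).
  apply: cvg_prod_seq => l.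
  exact: (cv l j k).
have := ge0_lim _ key.
have H : forall M, 0 <= Qf (fun j k => \prod_(l <- index_enum 'I_m)
     series (qA_term (a l) (b l) (q l) (alpha l) (z j l * (z k l)^*)) M) w.
  move=> M; exact: (Qf_prod (T := T) z M T0 (index_enum 'I_m) w).
move=> /(_ H) HH; apply: (le_trans HH); rewrite /Qf le_eqVlt; apply/orP; left; apply/eqP.
by apply: eq_bigr => j _; apply: eq_bigr => k _; rewrite mxE.
Qed.
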